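(* Let $z\in\mathcal F_\infty$, and write its cycles in $\mathbb P$ as $(a_i,b_i)$ with $a_i<b_i$ and $a_1<a_2<\cdots$. Let $u$ be the permutation of $\mathbb P$ whose one-line representation is $a_1b_1a_2b_2a_3b_3\cdots$, and let $\beta=u^{-1}$. Then the set of FPF-visible inversions of $z$ equals $\mathrm{Inv}(\beta)=\{(i,j):i<j,\ \beta(i)>\beta(j)\}$.
   Context: Let $S_\infty$ be the group of finitely supported permutations of $\mathbb P=\{1,2,\dots\}$. Let $\Theta(i)=i-(-1)^i$ and $\mathcal F_\infty=\{w^{-1}\Theta w:w\in S_\infty\}$. A pair $(i,j)\in\mathbb Z\times\mathbb Z$ is an FPF-visible inversion of $z$ if $i<j$ and $z(j)<\min\{i,z(i)\}$. *)

(* Defs.v *)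
(* positive integers P = {1,2,...} are modelled
   as the naturals n with 0 < n; maps on P are functions nat -> nat whose
   values off P are irrelevant. *)
From mathcomp Require Import all_boot.
Set Implicit Arguments. Unset Strict Implicit. Unset Printing Implicit Defensive.

Definition permP (w : nat -> nat) : Prop :=
  (forall i, 0 < i -> 0 < w i) /\
  (forall i j, 0 < i -> 0 < j -> w i = w j -> i = j) /\
  (forall j, 0 < j -> exists2 i, 0 < i & w i = j).

Definition in_Sinf (w : nat -> nat) : Prop :=
  permP w /\ exists N, forall i, N < i -> w i = i.

Definition invP (w v : nat -> nat) : Prop :=
  forall i, 0 < i -> v (w i) = i /\ w (v i) = i.

Definition Theta (i : nat) : nat := if odd i then i.+1 else i.-1.

Definition in_Finf (z : nat -> nat) : Prop :=
  exists w v, in_Sinf w /\ invP w v /\ forall i, 0 < i -> z i = v (Theta (w i)).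

Definition fpf_visible_inv (z : nat -> nat) (i j : nat) : Prop :=
  i < j /\ z j < minn i (z i).

Definition inv_of (beta : nat -> nat) (i j : nat) : Prop :=
  i < j /\ beta j < beta i.

(* u has one-line representation a_1 b_1 a_2 b_2 ... where the cycles of z
   are (a_k, b_k), a_k < b_k, a_1 < a_2 < ... :  u is a permutation of P with
   u(2k-1) = a_k, u(2k) = b_k. *)
Definition oneline_of_cycles (z u : nat -> nat) : Prop :=
  permP u /\
  (forall k, 0 < k -> u (2 * k).-1 < u (2 * k) /\ z (u (2 * k).-1) = u (2 * k)) /\
  (forall k, 0 < k -> u (2 * k).-1 < u (2 * k.+1).-1).

(* Main.v *)
Require Import Defs.
From mathcomp Require Import all_boot.
From mathcomp Require Import zify.

Lemma Theta_pos n : 0 < n -> 0 < Theta n.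
Proof. rewrite /Theta; case: n => [|[|n]] // _; case: ifP => // h; rewrite /= ?h //=. Qed.

Lemma Theta_invol n : 0 < n -> Theta (Theta n) = n.
Proof.
rewrite /Theta; case: n => [|n] // _.
case h: (odd n.+1); rewrite /= in h *.
  by rewrite (negbTE h).
by move/negbFE: h => h; rewrite /= h.
Qed.

Lemma z_invol z : in_Finf z -> forall i, 0 < i -> 0 < z i /\ z (z i) = i.
Proof.
move=> [w [v [[[wpos [winj wsur]] _] [inv zE]]]] i hi.
have hw := wpos i hi.
have ht := Theta_pos _ hw.
have hv : 0 < v (Theta (w i)).
  have [k hk <-] := wsur _ ht.
  by rewrite (proj1 (inv _ hk)).
rewrite !zE //; split => //.
by rewrite (proj2 (inv _ ht)) Theta_invol // (proj1 (inv _ hi)).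
Qed.

Section S.
Variables (z u beta : nat -> nat).
Hypothesis hz : in_Finf z.
Hypothesis hu : oneline_of_cycles z u.
Hypothesis hb : invP u beta.

Let a k := u (2 * k).-1.
Let b k := u (2 * k).

Lemma mono k l : 0 < k -> k < l -> a k < a l.
Proof.
move=> hk; elim: l => [|l IH] //; rewrite ltnS leq_eqVlt => /orP [/eqP <-|h].
  exact: (proj2 (proj2 hu)).
apply: ltn_trans (IH h) _; apply: (proj2 (proj2 hu)); lia.
Qed.

Lemma mono_iff k l : 0 < k -> 0 < l -> (a k < a l) = (k < l).
Proof.
move=> hk hl; case: (ltngtP k l) => h.
- exact: mono.
- by apply/negbTE; rewrite -leqNgt ltnW // mono.
- by subst; rewrite ltnn.
Qed.

Lemma decomp x : 0 < x -> exists2 k, 0 < k &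
  (x = a k /\ beta x = (2 * k).-1) \/ (x = b k /\ beta x = 2 * k).
Proof.
move=> hx.
have [p hp <-] := (proj2 (proj2 (proj1 hu))) x hx.
rewrite (proj1 (hb _ hp)).
have := odd_double_half p; case: (odd p) => /= e.
  exists (p./2.+1) => //; left; rewrite /a.
  have -> : (2 * p./2.+1).-1 = p by lia.
  by [].
exists p./2; first lia.
right; rewrite /b; have -> : 2 * p./2 = p by lia.
by [].
Qed.

Lemma lemma3p4_aux i j : 0 < i -> 0 < j ->
    (fpf_visible_inv z i j <-> inv_of beta i j).
Proof.
move=> hi hj.
have ab k : 0 < k -> a k < b k /\ z (a k) = b k := (proj1 (proj2 hu)) k.
have zb k : 0 < k -> z (b k) = a k.
  move=> hk; have [_ e] := ab k hk.
  have ha : 0 < a k.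
    by apply: (proj1 (proj1 hu)); lia.
  by rewrite -e (proj2 (z_invol _ hz _ ha)).
rewrite /fpf_visible_inv /inv_of.
have [ki hki Hi] := decomp _ hi.
have [kj hkj Hj] := decomp _ hj.
have M := mono_iff.
have Mi := M ki kj hki hkj. have Mj := M kj ki hkj hki.
have [abi zai] := ab ki hki. have zbi := zb ki hki.
have [abj zaj] := ab kj hkj. have zbj := zb kj hkj.
case: Hi => [[-> ->]|[-> ->]]; case: Hj => [[-> ->]|[-> ->]];
  rewrite ?zai ?zbi ?zaj ?zbj; split => [[h1 h2]|[h1 h2]]; split => //; lia.
Qed.

End S.

Theorem lemma3p4 (z u beta : nat -> nat) :
  in_Finf z ->
  oneline_of_cycles z u ->
  invP u beta ->
  forall i j, 0 < i -> 0 < j ->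
    (fpf_visible_inv z i j <-> inv_of beta i j).
Proof. move=> hz hu hb i j; exact: (lemma3p4_aux z u beta hz hu hb i j). Qed.
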